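(* Every (unbounded-fanin) formula computing $\textsc{parity}_n(x)=x_1\oplus\cdots\oplus x_n$ has $\Omega(n^2)$ gates, and likewise every formula computing $\textsc{majority}_n$ (which is 1 iff more than half of the $n$ input bits are 1) has $\Omega(n^2)$ gates.
   Context: A formula on input variables $x_1,\dots,x_n$ is a rooted tree whose leaves are labeled by input variables (the same variable may label many leaves) and whose internal vertices are \textsc{not} gates (fanin 1) or unbounded-fanin \textsc{and}/\textsc{or} gates; its number of gates is the number of \textsc{and} and \textsc{or} gates. *)

(* Defs.v *)
From mathcomp Require Import all_boot.
Set Implicit Arguments. Unset Strict Implicit. Unset Printing Implicit Defensive.

Inductive formula (n : nat) : Type :=
| FVar of 'I_n
| FNot of formula n
| FAnd of seq (formula n)
| FOr of seq (formula n).

Arguments FVar {n}.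
Arguments FNot {n}.
Arguments FAnd {n}.
Arguments FOr {n}.

Fixpoint eval_formula n (x : 'I_n -> bool) (F : formula n) : bool :=
  match F with
  | FVar i => x i
  | FNot G => ~~ eval_formula x G
  | FAnd l => all id (map (eval_formula x) l)
  | FOr l => has id (map (eval_formula x) l)
  end.

Fixpoint gates n (F : formula n) : nat :=
  match F with
  | FVar _ => 0
  | FNot G => gates G
  | FAnd l => (sumn (map (@gates n) l)).+1
  | FOr l => (sumn (map (@gates n) l)).+1
  end.

Definition computes n (F : formula n) (f : ('I_n -> bool) -> bool) : Prop :=
  forall x, eval_formula x F = f x.

Definition ones n (x : 'I_n -> bool) : nat := #|[pred i | x i]|.

Definition parity n (x : 'I_n -> bool) : bool := odd (ones x).

Definition majority n (x : 'I_n -> bool) : bool := n < 2 * ones x.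

(* Main.v *)
Require Import Defs.
From mathcomp Require Import all_boot zify.
Set Implicit Arguments. Unset Strict Implicit. Unset Printing Implicit Defensive.

Lemma sq4 X Y : 4 * (X * Y) <= (X + Y) * (X + Y).
Proof.
case: (leqP X Y) => H.
  have -> : Y = X + (Y - X) by lia.
  set d := Y - X. nia.
have -> : X = Y + (X - Y) by lia.
set d := X - Y. nia.
Qed.
Lemma amgm p X Y : p * p <= X * Y -> 2 * p <= X + Y.
Proof.
move=> h; have h4 := sq4 X Y.
rewrite leqNgt; apply/negP => lt.
have := ltn_mul lt lt. nia.
Qed.
Lemma comb e1 e2 L1 L2 a1 a2 b : e1 ^ 2 <= L1 * a1 * b -> e2 ^ 2 <= L2 * a2 * b ->
  (e1 + e2) ^ 2 <= (L1 + L2) * (a1 + a2) * b.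
Proof.
move=> h1 h2.
have h3 : (e1 * e2) * (e1 * e2) <= (L1 * a2 * b) * (L2 * a1 * b).
  have := leq_mul h1 h2. rewrite !expnS !expn0 !muln1. nia.
have := amgm h3. rewrite !expnS !expn0 !muln1 in h1 h2 *. nia.
Qed.

Section Basics.
Variable n : nat.

Fixpoint InF (c : formula n) (l : seq (formula n)) : Prop :=
  match l with nil => False | c' :: l' => c' = c \/ InF c l' end.

Fixpoint formula_ind2 (P : formula n -> Prop)
  (hV : forall i, P (FVar i)) (hN : forall G, P G -> P (FNot G))
  (hA : forall l, (forall c, InF c l -> P c) -> P (FAnd l))
  (hO : forall l, (forall c, InF c l -> P c) -> P (FOr l))
  (F : formula n) : P F :=
  let fix aux (l : seq (formula n)) : forall c, InF c l -> P c :=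
    match l with
    | nil => fun c H => False_ind _ H
    | c' :: l' => fun c H => match H with
       | or_introl e => eq_ind c' P (formula_ind2 hV hN hA hO c') c e
       | or_intror H' => aux l' c H' end
    end in
  match F with
  | FVar i => hV i
  | FNot G => hN G (formula_ind2 hV hN hA hO G)
  | FAnd l => hA l (aux l)
  | FOr l => hO l (aux l)
  end.

Fixpoint litof (F : formula n) : option ('I_n * bool) :=
  match F with
  | FVar i => Some (i, false)
  | FNot G => omap (fun p => (p.1, ~~ p.2)) (litof G)
  | _ => None
  end.

Lemma litof_eval (x : 'I_n -> bool) F v s :
  litof F = Some (v, s) -> eval_formula x F = x v (+) s.
Proof.
elim: F v s => [i|G IH| l | l] v s //=.
  by case=> -> <-; rewrite addbF.
case E: (litof G) => [[w t]|] //= [<- <-].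
by rewrite (IH _ _ E) addbN.
Qed.

Lemma litof_gates F p : litof F = Some p -> gates F = 0.
Proof.
elim: F p => [i|G IH| l | l] p //=.
by case E: (litof G) => [q|] //= _; apply: (IH q).
Qed.

End Basics.

Section Khr.
Variable n : nat.
Local Notation k := (n./2).
Local Notation X := {ffun 'I_n -> bool}.
Definition rst := {ffun 'I_k -> option bool}.

Definition fixedval (s : rst) (v : 'I_n) : option bool :=
  if (insub (v./2) : option 'I_k) is Some p then omap (fun b => b (+) odd v) (s p)
  else Some false.
Definition freev s v := fixedval s v == None.
Definition cons s (x : X) :=
  [forall v, if fixedval s v is Some t then x v == t else true].

Lemma consP s x v t : cons s x -> fixedval s v = Some t -> x v = t.
Proof. by move=> /forallP /(_ v); case: fixedval => // t' /eqP -> [->]. Qed.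

Definition flip (x : X) (i : 'I_n) : X := [ffun j => if j == i then ~~ x j else x j].
Definition adj (x y : X) := [exists i, y == flip x i].
Definition nb (B : {set X}) x := #|[set y in B | adj x y]|.
Definition E (A B : {set X}) := \sum_(x in A) nb B x.

Lemma flipE x i j : flip x i j = if j == i then ~~ x j else x j.
Proof. by rewrite ffunE. Qed.
Lemma flipK x i : flip (flip x i) i = x.
Proof. by apply/ffunP=> j; rewrite !flipE; case: eqP => // ->; rewrite negbK. Qed.
Lemma adj_sym x y : adj x y = adj y x.
Proof.
by apply/existsP/existsP => -[i /eqP ->]; exists i; rewrite flipK.
Qed.

Lemma nbE B x : nb B x = \sum_(y in B) adj x y.
Proof.
rewrite /nb -sum1_card big_mkcond /= [RHS]big_mkcond /=.
by apply: eq_bigr => y _; rewrite inE; case: (y \in B); case: adj.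
Qed.

Lemma E_sym (A B : {set X}) : E A B = \sum_(y in B) nb A y.
Proof.
rewrite /E (eq_bigr _ (fun x _ => nbE B x)) exchange_big /=.
by apply: eq_bigr => y _; rewrite nbE; apply: eq_bigr => x _; rewrite adj_sym.
Qed.

Lemma E_split (A B P : {set X}) : E A B = E (A :&: P) B + E (A :\: P) B.
Proof. by rewrite /E (big_setID P). Qed.

Lemma E0 (A B : {set X}) : (forall x, x \in A -> False) -> E A B = 0.
Proof. by move=> h; rewrite /E big1 // => x /h. Qed.
Lemma E0r (A B : {set X}) : (forall y, y \in B -> False) -> E A B = 0.
Proof. by move=> h; rewrite E_sym big1 // => x /h. Qed.

Definition kills s (b : bool) (c : formula n) :=
  if litof c is Some (v, t) then
    (if fixedval s v is Some u then b (+) (u (+) t) else false)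
  else false.
Definition isvar (c : formula n) v := omap fst (litof c) == Some v.
Definition own s b l :=
  if has (kills s b) l then 0 else #|[set v | freev s v & has (isvar^~ v) l]|.

Fixpoint cost s (F : formula n) : nat :=
  match F with
  | FVar i => freev s i
  | FNot G => cost s G
  | FAnd l => own s true l + sumn [seq (if litof c == None then cost s c else 0) | c <- l]
  | FOr l => own s false l + sumn [seq (if litof c == None then cost s c else 0) | c <- l]
  end.

Definition KH s F := forall A B : {set X},
  (forall x, x \in A -> cons s x && eval_formula x F) ->
  (forall y, y \in B -> cons s y && ~~ eval_formula y F) ->
  E A B ^ 2 <= cost s F * #|A| * #|B|.

Lemma KHb s F : KH s F -> forall b (A B : {set X}),
  (forall x, x \in A -> cons s x && (b (+) eval_formula x F)) ->
  (forall y, y \in B -> cons s y && ~~ (b (+) eval_formula y F)) ->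
  E A B ^ 2 <= cost s F * #|A| * #|B|.
Proof.
move=> h [] A B hA hB; last exact: h.
have -> : E A B = E B A.
  rewrite E_sym /E; apply: eq_bigr => y _; rewrite !nbE.
  by apply: eq_bigr => x _; rewrite adj_sym.
rewrite mulnAC; apply: h => [x /hB|y /hA]; case: cons => //=; by case: eval_formula.
Qed.


Lemma hasF (p : pred (formula n)) l : reflect (exists c, InF c l /\ p c) (has p l).
Proof.
elim: l => [|c l IH] /=; first by constructor => -[c []].
case pc: (p c); first by constructor; exists c; split => //; left.
apply: (iffP IH) => [[c' [h1 h2]]|[c' [[<-|h1] h2]]]; first by exists c'; split => //; right.
  by rewrite h2 in pc.
by exists c'.
Qed.

Lemma allF (p : pred (formula n)) l : all p l -> forall c, InF c l -> p c.
Proof. by elim: l => //= c l IH /andP[pc al] c' [<-|h] //; apply: IH. Qed.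

Lemma has_split (T : Type) (p q : pred T) l :
  has p l -> ~~ has (fun c => q c && p c) l -> has (fun c => ~~ q c && p c) l.
Proof.
by elim: l => //= c l IH; case: (p c); case: (q c) => //=.
Qed.

Lemma listpart s b l : (forall c, InF c l -> litof c = None -> KH s c) ->
  forall A B : {set X},
  (forall x, x \in A -> cons s x &&
     has (fun c => (litof c == None) && (b (+) eval_formula x c)) l) ->
  (forall y, y \in B -> cons s y && all (fun c => ~~ (b (+) eval_formula y c)) l) ->
  E A B ^ 2 <= sumn [seq (if litof c == None then cost s c else 0) | c <- l] * #|A| * #|B|.
Proof.
elim: l => [|c l IH] hK A B hA hB /=.
  by rewrite E0 // => x /hA; rewrite andbF.
case Hc: (litof c == None).
- set P := [set x : X | b (+) eval_formula x c].
  rewrite (E_split A B P) -(cardsID P A).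
  apply: comb.
  + apply: (KHb (hK c (or_introl erefl) (eqP Hc)) (b:=b)) => [x|y].
      by rewrite inE => /andP[/hA /andP[-> _]]; rewrite inE.
    by move/hB=> /andP[-> /andP[]].
  + apply: IH => [c' h' h''|x|y]; first exact: hK c' (or_intror h') h''.
      rewrite inE => /andP[xP /hA /andP[-> /=]].
      by rewrite inE in xP; rewrite Hc (negbTE xP).
    by move/hB=> /andP[-> /andP[]].
- rewrite add0n; apply: IH => [c' h' h''|x|y]; first exact: hK c' (or_intror h') h''.
    by move/hA; rewrite /= Hc.
  by move/hB=> /andP[-> /andP[]].
Qed.

Lemma clause s b l (A B : {set X}) : ~~ has (kills s b) l ->
  (forall x, x \in A -> cons s x &&
     has (fun c => (litof c != None) && (b (+) eval_formula x c)) l) ->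
  (forall y, y \in B -> cons s y && all (fun c => ~~ (b (+) eval_formula y c)) l) ->
  E A B ^ 2 <= #|[set v | freev s v & has (isvar^~ v) l]| * #|A| * #|B|.
Proof.
move=> nk hA hB.
set T := [set v | freev s v & has (isvar^~ v) l].
have e1 : E A B <= #|A|.
  rewrite /E -sum1_card; apply: leq_sum => x xA.
  have /andP[cx /hasF[c [cl /andP[lc tc]]]] := hA x xA.
  case E1: (litof c) lc => [[v t]|] // _.
  rewrite (litof_eval _ E1) in tc.
  apply: leq_trans (subset_leq_card (_ : _ \subset [set flip x v])) _; last by rewrite cards1.
  apply/subsetP => y; rewrite !inE => /andP[yB /existsP[i /eqP yE]].
  have /andP[_ /allF /(_ c cl)] := hB y yB.
  rewrite (litof_eval _ E1) yE flipE.
  case: (eqVneq v i) => [->|ne]; first by rewrite eqxx.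
  by rewrite tc.
have e2 : E A B <= #|T| * #|B|.
  rewrite E_sym mulnC -sum_nat_const; apply: leq_sum => y yB.
  have /andP[cy /allF ay] := hB y yB.
  apply: leq_trans (subset_leq_card (_ : _ \subset [set flip y v | v in T])) (leq_imset_card _ _).
  apply/subsetP => x; rewrite !inE => /andP[xA]; rewrite adj_sym => /existsP[i /eqP xE].
  apply/imsetP; exists i => //.
  have /andP[cx /hasF[c [cl /andP[lc tc]]]] := hA x xA.
  case E1: (litof c) lc => [[v t]|] // _.
  have fc := ay c cl. rewrite (litof_eval _ E1) in tc. rewrite (litof_eval _ E1) in fc.
  have vi : v = i.
    apply/eqP; apply: contraTT fc => ne.
    rewrite negbK; have <- : x v = y v by rewrite xE flipE (negbTE ne).
    exact: tc.
  subst v. rewrite inE; apply/andP; split.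
    rewrite /freev; case Ef: fixedval => [u|] //.
    have := consP cx Ef; have := consP cy Ef.
    move=> h1 h2; move: h1; rewrite xE flipE eqxx h2; by case: (u).
  by apply/hasF; exists c; split => //; rewrite /isvar E1.
  by rewrite xE flipK.
have := leq_mul e1 e2. rewrite expnS expn1. nia.
Qed.

Lemma gate s b l : (forall c, InF c l -> litof c = None -> KH s c) ->
  forall A B : {set X},
  (forall x, x \in A -> cons s x && has (fun c => b (+) eval_formula x c) l) ->
  (forall y, y \in B -> cons s y && ~~ has (fun c => b (+) eval_formula y c) l) ->
  E A B ^ 2 <= (own s b l + sumn [seq (if litof c == None then cost s c else 0) | c <- l])
                 * #|A| * #|B|.
Proof.
move=> hK A B hA hB; rewrite /own; case: ifP => [kl|nk].
  rewrite E0r ?exp0n // => y /hB /andP[cy /negP]; apply.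
  case/hasF: kl => c [cl]; rewrite /kills.
  case E1: (litof c) => [[v t]|] //; case Ef: fixedval => [u|] // ku.
  apply/hasF; exists c; split => //; rewrite (litof_eval _ E1) (consP cy Ef) //.
set P := [set x : X | has (fun c => (litof c != None) && (b (+) eval_formula x c)) l].
rewrite (E_split A B P) -(cardsID P A); apply: comb.
  apply: (@clause s b l); first by rewrite nk.
    by move=> x; rewrite !inE => /andP[/hA /andP[-> _] xP].
  by move=> y /hB /andP[-> h]; rewrite all_predC.
apply: (@listpart s b l) => // [x|y].
  rewrite !inE => /andP[xP /hA /andP[-> h]] /=.
  have := has_split h xP. by apply: sub_has => c; rewrite negbK.
by move=> /hB /andP[-> h]; rewrite all_predC.
Qed.

Lemma KH_all s F : KH s F.
Proof.
elim/formula_ind2: F => [i|G IH|l IH|l IH].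
- move=> A B hA hB.
  have hK : forall c, InF c [:: FVar i] -> litof c = None -> KH s c by move=> c [<-|[]].
  have h := @gate s false [:: FVar i] hK A B.
  apply: leq_trans (h _ _) _.
  + by move=> x /hA /=; rewrite orbF.
  + by move=> x /hB /=; rewrite orbF.
  rewrite /= addn0 -!mulnA leq_mul2r; apply/orP; right.
  rewrite /own; case: ifP => // _.
  case Hf: (freev s i).
    apply: (@leq_trans #|[set i]|); last by rewrite cards1.
    rewrite addn0; apply: subset_leq_card; apply/subsetP => v.
    by rewrite !inE /isvar /= orbF => /andP[_ /eqP [->]].
  rewrite /= addn0 leqn0 cards_eq0; apply/eqP/setP => v; rewrite !inE /isvar /= orbF.
  by apply/negP => /andP[fv /eqP [iv]]; subst v; rewrite fv in Hf.
- move=> A B hA hB; apply: (KHb IH (b:=true)) => [x /hA|y /hB] /=; by case: eval_formula.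
- move=> A B hA hB.
  have h := @gate s true l (fun c h _ => IH c h) B A.
  rewrite (_ : E A B = E B A); last first.
    rewrite E_sym /E; apply: eq_bigr => y _; rewrite !nbE.
    by apply: eq_bigr => x _; rewrite adj_sym.
  rewrite /= mulnAC; apply: h => [x /hB|y /hA] /=; rewrite all_map;
    case: cons => //=.
    by move=> h; rewrite -has_predC in h; apply: sub_has h => c.
  by move=> h; rewrite -all_predC; apply: (sub_all _ h) => c /=; rewrite negbK.
- move=> A B hA hB.
  apply: (@gate s false l (fun c h _ => IH c h)) => [x /hA|y /hB] /=; rewrite has_map //.
Qed.


Lemma card_rst : #|{: rst}| = 3 ^ k.
Proof. by rewrite card_ffun card_option card_bool card_ord. Qed.

Lemma pair_lt (p : 'I_k) (c : bool) : c + p.*2 < n.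
Proof.
have := ltn_ord p; have := odd_double_half n.
case: c => /=; lia.
Qed.
Definition pv (pc : 'I_k * bool) : 'I_n := Ordinal (pair_lt pc.1 pc.2).

Lemma fixedval_in s (v : 'I_n) (h : v./2 < k) :
  fixedval s v = omap (fun b => b (+) odd v) (s (Ordinal h)).
Proof. by rewrite /fixedval insubT. Qed.

Lemma fixedval_out s (v : 'I_n) : ~~ (v./2 < k) -> fixedval s v = Some false.
Proof. by move=> h; rewrite /fixedval insubN. Qed.

Lemma pvE (v : 'I_n) (h : v./2 < k) : v = pv (Ordinal h, odd v).
Proof. by apply: val_inj => /=; rewrite odd_double_half. Qed.

Definition killsat b (c : formula n) (p : 'I_k) (be : bool) :=
  if litof c is Some (v, t) then (v./2 == p) && (b (+) ((be (+) odd v) (+) t)) else false.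
Definition Qs b l := [set p : 'I_k | [exists be, has (fun c => killsat b c p be) l]].
Definition allowed b l (p : 'I_k) : pred (option bool) :=
  fun o => if o is Some be then ~~ has (fun c => killsat b c p be) l else true.

Lemma nokill_fam s b l : ~~ has (kills s b) l -> s \in family (allowed b l).
Proof.
move=> nk; apply/familyP => p; rewrite /allowed unfold_in.
case Es: (s p) => [be|] //; apply/negP => /hasF [c [cl]].
rewrite /killsat; case E1: (litof c) => [[v t]|] // /andP[/eqP vp kc].
move/negP: nk; apply; apply/hasF; exists c; split => //.
have h : v./2 < k by rewrite vp.
rewrite /kills E1 (fixedval_in s h) /=.
have -> : Ordinal h = p by apply: val_inj.
by rewrite Es.
Qed.

Lemma T_le s b l : #|[set v | freev s v & has (isvar^~ v) l]| <= 2 * #|Qs b l|.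
Proof.
rewrite mulnC -[2]card_bool -cardsT -cardsX.
apply: leq_trans (subset_leq_card (_ : _ \subset pv @: setX (Qs b l) [set: bool]))
  (leq_imset_card _ _).
apply/subsetP => v; rewrite inE => /andP[fv /hasF[c [cl iv]]].
have h : v./2 < k.
  by move: fv; rewrite /freev /fixedval; case: insubP.
apply/imsetP; exists (Ordinal h, odd v); last exact: pvE.
rewrite !inE andbT; apply/existsP.
move: iv; rewrite /isvar; case E1: (litof c) => [[w t]|] //= /eqP [wv]; subst w.
exists (~~ (b (+) (odd v (+) t))); apply/hasF; exists c; split => //.
rewrite /killsat E1 eqxx /=.
by case: (b); case: (odd v); case: (t).
Qed.

Lemma own_le s b l : own s b l <=
  (if s \in family (allowed b l) then 2 * #|Qs b l| else 0).
Proof.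
rewrite /own; case: ifP => // nk.
by rewrite nokill_fam ?nk // T_le.
Qed.

Lemma card_fam_prod (F : 'I_k -> pred (option bool)) :
  #|(family F : simpl_pred rst)| = \prod_(x : 'I_k) #|F x|.
Proof.
rewrite card_family /image_mem -[in RHS]big_enum /=.
elim: (enum _) => [|a r IH] /=; first by rewrite big_nil.
by rewrite big_cons IH.
Qed.

Lemma pow23 q : q * 2 ^ q <= 3 ^ q.
Proof.
elim: q => [//|q IH].
case: q IH => [//|q] IH.
case: q IH => [//|q] IH.
rewrite (expnS 2) (expnS 3).
have h : q.+3 * 2 <= 3 * q.+2 by lia.
have := leq_mul h (leqnn (2 ^ q.+2)).
move: IH; generalize (2 ^ q.+2) (3 ^ q.+2) => a c IH h2. nia.
Qed.

Lemma own_sum b l : \sum_(s : rst) own s b l <= 2 * 3 ^ k.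
Proof.
apply: (@leq_trans (\sum_(s : rst)
   (if s \in family (allowed b l) then 2 * #|Qs b l| else 0))).
  by apply: leq_sum => s _; apply: own_le.
rewrite -big_mkcond /= sum_nat_const.
set q := #|Qs b l|.
have hfam : #|family (allowed b l)| <= 2 ^ q * 3 ^ #|~: Qs b l|.
  rewrite card_fam_prod.
  apply: leq_trans (leq_prod (E2 := fun p => if p \in Qs b l then 2 else 3) _) _.
    move=> p _; case: ifP => pQ.
      rewrite inE in pQ; case/existsP: pQ => be hb.
      have : #|allowed b l p| + #|[predC allowed b l p]| = 3.
        by rewrite cardC card_option card_bool.
      have : 0 < #|[predC allowed b l p]|.
        by apply/card_gt0P; exists (Some be); rewrite !inE /= unfold_in /= hb.
      lia.
    by rewrite (leq_trans (max_card _)) // card_option card_bool.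
  rewrite (bigID (fun p => p \in Qs b l)) /=.
  rewrite (eq_bigr (fun _ => 2)); last by move=> p ->.
  rewrite [X in _ * X <= _](eq_bigr (fun _ => 3)); last by move=> p /negbTE ->.
  rewrite prod_nat_const.
  rewrite (eq_bigl (fun p => p \in ~: Qs b l)); last by move=> p; rewrite in_setC.
  by rewrite prod_nat_const.
have hk : q + #|~: Qs b l| = k by rewrite cardsC card_ord.
have hp := pow23 q.
have e3 : 3 ^ k = 3 ^ q * 3 ^ #|~: Qs b l| by rewrite -expnD hk.
rewrite e3.
set r := #|~: Qs b l| in hfam e3 *.
apply: leq_trans (leq_mul hfam (leqnn (2 * q))) _.
have := leq_mul hp (leqnn (3 ^ r)).
generalize (2 ^ q) (3 ^ q) (3 ^ r).
move=> a c d h2. nia.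
Qed.


Lemma sum_sumn (G : rst -> formula n -> nat) l :
  \sum_(s : rst) sumn [seq G s c | c <- l] = sumn [seq \sum_(s : rst) G s c | c <- l].
Proof.
elim: l => [|c l IH] /=; first by rewrite big1.
by rewrite big_split IH.
Qed.

Lemma sumn_le (f g : formula n -> nat) l :
  (forall c, InF c l -> f c <= g c) -> sumn (map f l) <= sumn (map g l).
Proof.
elim: l => [|c l IH] //= h.
by rewrite leq_add // ?h ?IH // => [|c' h']; [left | apply: h; right].
Qed.

Lemma sumn_mul a (g : formula n -> nat) l : sumn [seq a * g c | c <- l] = a * sumn (map g l).
Proof. by elim: l => [|c l IH] /=; rewrite ?muln0 // IH mulnDr. Qed.

Lemma gatesum b l : (forall c, InF c l ->
     \sum_(s : rst) cost s c <= 3 ^ k * (2 * gates c + (litof c != None))) ->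
  \sum_(s : rst) (own s b l + sumn [seq (if litof c == None then cost s c else 0) | c <- l])
    <= 3 ^ k * (2 * (sumn (map (@gates n) l)).+1 + false).
Proof.
move=> IH; rewrite big_split /= sum_sumn.
apply: leq_trans (leq_add (own_sum b l) (sumn_le (g := fun c => 3 ^ k * (2 * gates c)) _)) _.
  move=> c cl; case: eqP => Hc.
    by apply: leq_trans (IH c cl) _; rewrite Hc eqxx addn0.
  by rewrite big1.
rewrite !sumn_mul addn0; generalize (3 ^ k) (sumn [seq gates i | i <- l]) => a c; nia.
Qed.

Lemma costsum F : \sum_(s : rst) cost s F <= 3 ^ k * (2 * gates F + (litof F != None)).
Proof.
elim/formula_ind2: F => [i|G IH|l IH|l IH] /=.
- apply: (@leq_trans (\sum_(s : rst) 1)); first by apply: leq_sum => s _; apply: leq_b1.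
  by rewrite sum1_card card_rst muln1.
- by case: (litof G) IH.
- exact: gatesum.
- exact: gatesum.
Qed.

Definition fs (s : rst) := #|[set p : 'I_k | s p == None]|.

Lemma sumf : \sum_(s : rst) fs s * 3 = k * 3 ^ k.
Proof.
rewrite -big_distrl /=.
have -> : \sum_(s : rst) fs s = \sum_(p : 'I_k) \sum_(s : rst) (s p == None).
  rewrite exchange_big /=; apply: eq_bigr => s _.
  rewrite /fs -sum1_card [LHS]big_mkcond /=; apply: eq_bigr => p _.
  by rewrite inE; case: eqP.
rewrite big_distrl /= -[k in RHS]card_ord -sum_nat_const.
apply: eq_bigr => p _.
have -> : \sum_(s : rst) (s p == None) =
   #|family (fun i : 'I_k => if i == p then pred1 (@None bool) else predT)|.
  rewrite -sum1_card [RHS]big_mkcond /=; apply: eq_bigr => s _.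
  case: ifP => h.
    by move/familyP: h => /(_ p); rewrite eqxx unfold_in /= => ->.
  case: eqP => // sp; move/negbT/negP: h => H; exfalso; apply: H; apply/familyP => i.
  by case: eqP => [->|]; rewrite unfold_in //= sp.
rewrite card_fam_prod (bigD1 p) //= eqxx card1 mul1n.
rewrite (eq_bigr (fun _ => 3)); last first.
  by move=> i /negbTE ->; rewrite card_option card_bool.
rewrite prod_nat_const cardC1 card_ord.
case: (n./2) p => [[]//|m] p /=.
by rewrite expnS mulnC.
Qed.

Lemma arith a c d kk : a * 3 = kk * d -> 6 * kk * a <= 9 * c + d * kk ^ 2 ->
  kk ^ 2 * d <= 9 * c.
Proof. rewrite !expnS expn0 muln1. nia. Qed.

Lemma sumf2 : k ^ 2 * 3 ^ k <= 9 * \sum_(s : rst) fs s ^ 2.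
Proof.
have h : forall s : rst, 6 * k * fs s <= 9 * fs s ^ 2 + k ^ 2.
  move=> s; have := sq4 (3 * fs s) k. rewrite !expnS !expn0 !muln1. nia.
have : \sum_(s : rst) 6 * k * fs s <= \sum_(s : rst) (9 * fs s ^ 2 + k ^ 2).
  by apply: leq_sum => s _; apply: h.
rewrite big_split /= sum_nat_const card_rst.
have -> : \sum_(s : rst) 6 * k * fs s = 6 * k * \sum_(s : rst) fs s by rewrite big_distrr.
have -> : \sum_(s : rst) 9 * fs s ^ 2 = 9 * \sum_(s : rst) fs s ^ 2 by rewrite big_distrr.
have hs := sumf. rewrite -big_distrl /= in hs.
move=> h2; exact: (arith hs h2).
Qed.


Lemma deg (A B : {set X}) al be :
  (forall x, x \in A -> al <= nb B x) -> (forall y, y \in B -> be <= nb A y) ->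
  al * be * (#|A| * #|B|) <= E A B ^ 2.
Proof.
move=> hA hB.
have e1 : #|A| * al <= E A B by rewrite -sum_nat_const; apply: leq_sum.
have e2 : #|B| * be <= E A B by rewrite E_sym -sum_nat_const; apply: leq_sum.
have := leq_mul e1 e2; rewrite expnS expn1.
by move=> h; apply: leq_trans h; rewrite mulnACA (mulnC al) (mulnC be) mulnACA.
Qed.

Lemma lb s F (A B : {set X}) al be :
  (forall x, x \in A -> cons s x && eval_formula x F) ->
  (forall y, y \in B -> cons s y && ~~ eval_formula y F) ->
  (forall x, x \in A -> al <= nb B x) -> (forall y, y \in B -> be <= nb A y) ->
  0 < #|A| -> 0 < #|B| -> al * be <= cost s F.
Proof.
move=> hA hB dA dB pA pB.
have h := leq_trans (deg dA dB) (KH_all hA hB).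
rewrite -[cost s F * _ * _]mulnA leq_pmul2r // in h.
by rewrite muln_gt0 pA pB.
Qed.

Definition cnt (P : pred 'I_n) (x : X) := #|[set w | P w && x w]|.

Lemma cntE (P : pred 'I_n) (x : X) : cnt P x = \sum_w (P w && x w).
Proof.
rewrite /cnt -sum1_card [LHS]big_mkcond /=; apply: eq_bigr => w _.
by rewrite inE; case: (P w && x w).
Qed.

Lemma cnt_flip (P : pred 'I_n) (x : X) v : P v -> cnt P (flip x v) + x v = cnt P x + ~~ x v.
Proof.
move=> Pv; rewrite !cntE (bigD1 v) //= [in RHS](bigD1 v) //= flipE eqxx Pv /=.
have -> : \sum_(i < n | i != v) (P i && flip x v i) = \sum_(i < n | i != v) (P i && x i).
  by apply: eq_bigr => w /negbTE wv; rewrite flipE wv.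
by case: (x v) => /=; rewrite ?add0n ?addn0 // addnC.
Qed.

Lemma ones_cnt (x : X) : ones x = cnt predT x.
Proof. by rewrite /ones /cnt; apply: eq_card => w; rewrite !inE. Qed.

Lemma pv_inj : injective pv.
Proof.
move=> [p c] [q d] /(congr1 val) /= h.
have hp : p = q :> nat by rewrite -(half_bit_double p c) h half_bit_double.
have hc : c = d.
  by move: (congr1 odd h); rewrite !oddD !odd_double !addbF; case: (c); case: (d).
by rewrite hc (val_inj hp).
Qed.

Lemma pv_half pc : (val (pv pc))./2 = val pc.1.
Proof. by case: pc => p c /=; rewrite half_bit_double. Qed.
Lemma pv_odd pc : odd (val (pv pc)) = pc.2.
Proof. by case: pc => p c /=; rewrite oddD odd_double addbF; case: (c). Qed.

Lemma fixedval_pv s pc : fixedval s (pv pc) = omap (fun b => b (+) pc.2) (s pc.1).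
Proof.
have h : (val (pv pc))./2 < k by rewrite pv_half ltn_ord.
rewrite (fixedval_in s h) pv_odd.
by have -> : Ordinal h = pc.1 by apply: val_inj; rewrite /= pv_half.
Qed.

Definition FV s := [set v : 'I_n | freev s v].

Lemma card_FV s : #|FV s| = 2 * fs s.
Proof.
have -> : FV s = pv @: setX [set p | s p == None] [set: bool].
  apply/setP => v; rewrite inE /freev; apply/eqP/imsetP.
    move=> fv; have h : v./2 < k.
      by move: fv; rewrite /fixedval; case: insubP.
    exists (Ordinal h, odd v); last exact: pvE.
    rewrite !inE andbT; move: fv; rewrite (fixedval_in s h).
    by case: (s _).
  case=> pc; rewrite !inE andbT => /eqP sp ->.
  by rewrite fixedval_pv sp.
by rewrite (card_imset _ pv_inj) cardsX cardsT card_bool mulnC.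
Qed.

Lemma card_fixtrue s : #|[set v | fixedval s v == Some true]| + fs s = k.
Proof.
have -> : [set v | fixedval s v == Some true] =
          (fun p => pv (p, s p == Some false)) @: [set p | s p != None].
  apply/setP => v; rewrite inE; apply/eqP/imsetP.
    move=> fv; have h : v./2 < k.
      by case: (leqP k (v./2)) => // h; move: fv; rewrite fixedval_out // -leqNgt.
    exists (Ordinal h).
      by rewrite inE; move: fv; rewrite (fixedval_in s h); case: (s _).
    rewrite {1}(pvE h); congr pv; congr pair.
    by move: fv; rewrite (fixedval_in s h); case: (s _) => [[]|] //=; case: (odd v).
  case=> p; rewrite inE => sp ->.
  by rewrite fixedval_pv /=; case: (s p) sp => [[]|].
rewrite card_in_imset; last first.
  by move=> p q _ _ /(congr1 (fun v : 'I_n => (val v)./2)) /=; rewrite !half_bit_double => /val_inj.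
rewrite /fs.
apply: etrans (card_ord k).
rewrite -(cardsC [set p | s p != None]); congr addn; apply: eq_card => p.
by rewrite !inE negbK.
Qed.

Lemma ones_cons s x : cons s x ->
  ones x = #|[set v | fixedval s v == Some true]| + cnt (freev s) x.
Proof.
move=> cx; rewrite ones_cnt /cnt addnC -(cardsID (FV s) [set w | predT w && x w]).
congr addn.
  by apply: eq_card => w; rewrite !inE andbC.
apply: eq_card => w; rewrite !inE /freev.
case E1: (fixedval s w) => [t|] //=.
by rewrite (consP cx E1); case: (t).
Qed.

Definition x0 s : X := [ffun v => if fixedval s v is Some t then t else false].

Lemma cons_x0 s : cons s (x0 s).
Proof. by apply/forallP => v; rewrite ffunE; case: fixedval. Qed.

Lemma cnt_x0 s : cnt (freev s) (x0 s) = 0.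
Proof.
apply/eqP; rewrite cards_eq0; apply/eqP/setP => v; rewrite !inE ffunE /freev.
by case: fixedval.
Qed.

Lemma cons_flip s x v : freev s v -> cons s x -> cons s (flip x v).
Proof.
move=> fv cx; apply/forallP => w; case E1: fixedval => [t|] //.
rewrite flipE; case: (eqVneq w v) => [wv|_]; first by move: fv; rewrite -wv /freev E1.
by rewrite (consP cx E1).
Qed.

Lemma cnt_le_FV s x : cnt (freev s) x <= #|FV s|.
Proof. by apply: subset_leq_card; apply/subsetP => w; rewrite !inE => /andP[]. Qed.

Lemma exists_cnt s j : j <= #|FV s| -> exists x, cons s x && (cnt (freev s) x == j).
Proof.
elim: j => [|j IH] h.
  by exists (x0 s); rewrite cons_x0 cnt_x0.
case: (IH (ltnW h)) => x /andP[cx /eqP cj].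
have [v vF vx] : exists2 v, freev s v & ~~ x v.
  case: (boolP [exists v, freev s v && ~~ x v]) => [/existsP[v /andP[fv xv]]|hv].
    by exists v.
  move/existsPn: hv => hv.
  have : #|FV s| <= cnt (freev s) x.
    apply: subset_leq_card; apply/subsetP => w; rewrite !inE => fw.
    by rewrite fw /=; have := hv w; rewrite fw /= negbK.
  by rewrite cj leqNgt h.
exists (flip x v); rewrite cons_flip //=.
have := cnt_flip x vF. by rewrite (negbTE vx) cj addn0 addn1 => ->.
Qed.

Lemma flip_inj x : injective (flip x).
Proof.
move=> v w /ffunP /(_ v); rewrite !flipE eqxx.
by case: eqP => // _; case: (x v).
Qed.

Lemma lb_parity s F : computes F (@parity n) -> fs s ^ 2 <= cost s F.
Proof.
move=> hF.
case: (posnP (fs s)) => [->|fpos]; first by rewrite exp0n.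
set A := [set x : X | cons s x && parity x].
set B := [set x : X | cons s x && ~~ parity x].
have parflip x v : freev s v -> parity (flip x v) = ~~ parity x.
  move=> fv; have := cnt_flip x (P := predT) (v := v) erefl.
  rewrite /parity -!ones_cnt => h.
  have := congr1 odd h; rewrite !oddD; case: (x v) => /=; rewrite ?addbT ?addbF => H.
    by rewrite -H negbK. exact: H.
have dg (C D : {set X}) : (forall x, x \in C -> cons s x) ->
    (forall x v, x \in C -> freev s v -> flip x v \in D) ->
    forall x, x \in C -> fs s <= nb D x.
  move=> hC hCD x xC.
  apply: leq_trans (_ : #|FV s| <= _).
    by rewrite card_FV leq_pmull.
  rewrite -(card_imset (FV s) (@flip_inj x)); apply: subset_leq_card.
  apply/subsetP => y /imsetP [v]; rewrite inE => fv ->.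
  rewrite inE hCD //=; apply/existsP; exists v; by [].
rewrite expnS expn1.
have fv0 : exists v, freev s v.
  have : 0 < #|FV s| by rewrite card_FV muln_gt0.
  by case/card_gt0P => v; rewrite inE => h; exists v.
case: fv0 => v fv.
have hxA : forall x, cons s x -> parity x -> (x \in A) && (flip x v \in B).
  by move=> x cx px; rewrite !inE cx px cons_flip //= parflip // px.
have hxB : forall x, cons s x -> ~~ parity x -> (x \in B) && (flip x v \in A).
  by move=> x cx px; rewrite !inE cx px cons_flip //= parflip // px.
apply: (@lb s F A B) => //.
- by move=> x; rewrite inE hF => /andP[-> ->].
- by move=> x; rewrite inE hF => /andP[-> ->].
- apply: dg => [x|x w]; first by rewrite inE => /andP[].
  by rewrite !inE => /andP[cx px] fw; rewrite cons_flip //= parflip // px.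
- apply: dg => [x|x w]; first by rewrite inE => /andP[].
  by rewrite !inE => /andP[cx px] fw; rewrite cons_flip //= parflip // negbK.
- apply/card_gt0P; case: (boolP (parity (x0 s))) => p0.
    by exists (x0 s); case/andP: (hxA _ (cons_x0 s) p0).
  by exists (flip (x0 s) v); case/andP: (hxB _ (cons_x0 s) p0).
- apply/card_gt0P; case: (boolP (parity (x0 s))) => p0.
    by exists (flip (x0 s) v); case/andP: (hxA _ (cons_x0 s) p0).
  by exists (x0 s); case/andP: (hxB _ (cons_x0 s) p0).
Qed.


Lemma fs_le s : fs s <= k.
Proof. by apply: leq_trans (max_card _) _; rewrite card_ord. Qed.

Lemma lb_majority s F : computes F (@majority n) -> fs s ^ 2 <= cost s F.
Proof.
move=> hF.
case: (posnP (fs s)) => [->|fpos]; first by rewrite exp0n.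
set f := fs s.
have hn := odd_double_half n.
have hft := card_fixtrue s.
have hfk := fs_le s.
have majE x : cons s x -> majority x = (f < cnt (freev s) x).
  move=> cx; rewrite /majority (ones_cons cx).
  move: hft hn hfk; rewrite -/f; case: (odd n) => /=; set m := n./2;
    set a := #|_|; set c := cnt _ _; move=> *; apply/idP/idP; lia.
set A := [set x : X | cons s x && (cnt (freev s) x == f.+1)].
set B := [set x : X | cons s x && (cnt (freev s) x == f)].
have hFV := card_FV s.
apply: (@lb s F A B).
- by move=> x; rewrite inE hF => /andP[cx /eqP cf]; rewrite cx majE // cf ltnSn.
- by move=> x; rewrite inE hF => /andP[cx /eqP cf]; rewrite cx majE // cf ltnn.
- move=> x; rewrite inE => /andP[cx /eqP cf].
  apply: leq_trans (_ : #|[set w | freev s w && x w]| <= _).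
    by rewrite -/(cnt _ _) cf.
  rewrite -(card_imset _ (@flip_inj x)); apply: subset_leq_card.
  apply/subsetP => y /imsetP [v]; rewrite inE => /andP[fv xv] ->.
  rewrite !inE cons_flip //=; apply/andP; split; last by apply/existsP; exists v.
  have := cnt_flip x fv; rewrite xv cf /= addn1 addn0 => -[->] //.
- move=> y; rewrite inE => /andP[cy /eqP cf].
  apply: leq_trans (_ : #|[set w | freev s w && ~~ y w]| <= _).
    have := cardsID [set w | y w] (FV s).
    have -> : FV s :&: [set w | y w] = [set w | freev s w && y w].
      by apply/setP => w; rewrite !inE.
    have -> : FV s :\: [set w | y w] = [set w | freev s w && ~~ y w].
      by apply/setP => w; rewrite !inE andbC.
    rewrite -/(cnt _ _) cf hFV; lia.
  rewrite -(card_imset _ (@flip_inj y)); apply: subset_leq_card.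
  apply/subsetP => x /imsetP [v]; rewrite inE => /andP[fv yv] ->.
  rewrite !inE cons_flip //=; apply/andP; split; last first.
    by apply/existsP; exists v.
  by have := cnt_flip y fv; rewrite (negbTE yv) cf /= addn1 addn0 => ->.
- have hj : f.+1 <= #|FV s| by rewrite hFV; lia.
  have [z /andP[cz /eqP cz']] := exists_cnt hj.
  by apply/card_gt0P; exists z; rewrite inE cz cz' eqxx.
- have hj : f <= #|FV s| by rewrite hFV; lia.
  have [z /andP[cz /eqP cz']] := exists_cnt hj.
  by apply/card_gt0P; exists z; rewrite inE cz cz' eqxx.
Qed.

End Khr.

Lemma final n (F : formula n) : (forall s : rst n, fs s ^ 2 <= cost s F) ->
  (n./2) ^ 2 <= 9 * (2 * gates F + (litof F != None)).
Proof.
move=> h.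
have h1 := @sumf2 n.
have h2 : \sum_(s : rst n) fs s ^ 2 <= \sum_(s : rst n) cost s F by apply: leq_sum => s _.
have h3 := costsum F.
have h4 := leq_trans h1 (leq_mul (leqnn 9) (leq_trans h2 h3)).
move: h4; rewrite mulnCA [X in X <= _]mulnC leq_pmul2l ?expn_gt0 //.
Qed.

Lemma final2 n (F : formula n) : 8 <= n -> (forall s : rst n, fs s ^ 2 <= cost s F) ->
  n ^ 2 <= 162 * gates F.
Proof.
move=> hn h; have := final h.
have hk := odd_double_half n.
case E: (litof F) => [p|] /=.
  rewrite (litof_gates E) => h'.
  have : 4 <= n./2 by move: hk; case: (odd n) => /=; lia.
  move=> h4; have := leq_mul h4 h4; rewrite expnS expn1 in h'. lia.
rewrite addn0 => h'.
have h5 : n <= 3 * n./2 by move: hk; case: (odd n) => /=; lia.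
have := leq_mul h5 h5; rewrite !expnS !expn0 !muln1 in h' *. nia.
Qed.

Theorem mainTheorem14 :
  exists c n0 : nat, 0 < c /\
    forall n : nat, n0 <= n ->
      (forall F : formula n, computes F (@parity n) -> n ^ 2 <= c * gates F) /\
      (forall F : formula n, computes F (@majority n) -> n ^ 2 <= c * gates F).
Proof.
exists 162, 8; split => // n hn; split => F hF; apply: final2 => // s.
  exact: lb_parity.
exact: lb_majority.
Qed.
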